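(* Consider the $(a,b,c)$ model with $a\le b\le c$ positive integers. There are constants $\kappa$ and $\lambda$, depending only on $a,b,c$, such that the following holds: if the cube $[0,l]^3$ is internally spanned, then for every $k\in[1,\frac{l-\lambda}{\kappa}]$ there is a rectangular block (contained in $[0,l]^3$) whose longest side has length in $[k,\kappa k+\lambda]$ and which is weakly crossed.
   Context: The $(a,b,c)$ model: the neighborhood of $(x,y,z)\in\mathbb Z^3$ consists of $(x\pm i,y,z)$, $1\le i\le a$; $(x,y\pm j,z)$, $1\le j\le b$; $(x,y,z\pm k)$, $1\le k\le c$. Given an initial set of occupied sites, the bootstrap rule repeatedly occupies every empty site having at least $a+b+c$ occupied sites in its neighborhood, until no change. A cube is internally spanned if running the bootstrap rule using only the initially occupied sites inside it results in all its sites being occupied. Weak enhancement of a set of sites $\rho$: (1) evolve by the $(a,b,c)$ bootstrap rule, taking into account only occupied sites in $\rho$; (2) then, for every site that became occupied (was initially empty), draw line segments from it to each site in its neighborhood that is occupied in the final configuration, and additionally occupy every empty site crossed by at least one such segment (such sites are called weakly spanned). A rectangular block is weakly crossed if, after weakly enhancing it, it is internally crossed in every direction, i.e. for each of the three coordinate directions there is a path of occupied sites connecting the two opposite faces of the block orthogonal to that direction. *)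

(* Defs.v *)
From Stdlib Require Import ZArith List.
Import ListNotations.
Open Scope Z_scope.

Definition site : Type := (Z * Z * Z)%type.

Definition add (p q : site) : site :=
  let '(x1, y1, z1) := p in let '(x2, y2, z2) := q in (x1 + x2, y1 + y2, z1 + z2).

Definition scale (m : Z) (e : site) : site :=
  let '(x, y, z) := e in (m * x, m * y, m * z).

Definition cx (p : site) : Z := let '(x, _, _) := p in x.
Definition cy (p : site) : Z := let '(_, y, _) := p in y.
Definition cz (p : site) : Z := let '(_, _, z) := p in z.

Definition unit_dir (e : site) : Prop :=
  e = (1, 0, 0) \/ e = (-1, 0, 0) \/ e = (0, 1, 0) \/ e = (0, -1, 0)
  \/ e = (0, 0, 1) \/ e = (0, 0, -1).

Definition nbr (a b c : nat) (p q : site) : Prop :=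
     (exists i, 1 <= Z.abs i <= Z.of_nat a /\ q = add p (i, 0, 0))
  \/ (exists j, 1 <= Z.abs j <= Z.of_nat b /\ q = add p (0, j, 0))
  \/ (exists k, 1 <= Z.abs k <= Z.of_nat c /\ q = add p (0, 0, k)).

(* This is the final configuration of the (possibly infinite)
   dynamics on Z^3, i.e. the least set containing A and stable under the rule. *)
Inductive closure (a b c : nat) (A : site -> Prop) : site -> Prop :=
| cl_init : forall x, A x -> closure a b c A x
| cl_step : forall x (l : list site),
    NoDup l -> (a + b + c <= length l)%nat ->
    (forall y, In y l -> nbr a b c x y /\ closure a b c A y) ->
    closure a b c A x.

Record block := Block { bx1 : Z; bx2 : Z; by1 : Z; by2 : Z; bz1 : Z; bz2 : Z }.

Definition valid_block (B : block) : Prop :=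
  bx1 B <= bx2 B /\ by1 B <= by2 B /\ bz1 B <= bz2 B.

Definition in_block (B : block) (s : site) : Prop :=
  bx1 B <= cx s <= bx2 B /\ by1 B <= cy s <= by2 B /\ bz1 B <= cz s <= bz2 B.

Definition block_sub (B C : block) : Prop :=
  bx1 C <= bx1 B /\ bx2 B <= bx2 C /\ by1 C <= by1 B /\ by2 B <= by2 C
  /\ bz1 C <= bz1 B /\ bz2 B <= bz2 C.

Definition cube (l : nat) : block :=
  Block 0 (Z.of_nat l) 0 (Z.of_nat l) 0 (Z.of_nat l).

(* Side lengths: the side [x1,x2] has length x2 - x1 (so [0,l] has length l). *)
Definition longest_side (B : block) : Z :=
  Z.max (bx2 B - bx1 B) (Z.max (by2 B - by1 B) (bz2 B - bz1 B)).

Definition restrict (A : site -> Prop) (B : block) : site -> Prop :=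
  fun s => A s /\ in_block B s.

Definition internally_spanned (a b c : nat) (A : site -> Prop) (B : block) : Prop :=
  forall s, in_block B s -> closure a b c (restrict A B) s.

Definition on_segment (p q s : site) : Prop :=
  exists e n m, unit_dir e /\ q = add p (scale n e) /\ s = add p (scale m e)
                /\ 0 < m < n.

Definition weakly_spanned (a b c : nat) (rho : site -> Prop) (s : site) : Prop :=
  exists x y, closure a b c rho x /\ ~ rho x /\ nbr a b c x y
              /\ closure a b c rho y /\ on_segment x y s.

Definition weak_enhancement (a b c : nat) (rho : site -> Prop) : site -> Prop :=
  fun s => closure a b c rho s \/ weakly_spanned a b c rho s.

Definition adjacent (s t : site) : Prop := exists e, unit_dir e /\ t = add s e.

Fixpoint nn_path (P : site -> Prop) (s : site) (l : list site) : Prop :=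
  match l with
  | nil => True
  | t :: l' => adjacent s t /\ P t /\ nn_path P t l'
  end.

Definition crosses (P : site -> Prop) (coord : site -> Z) (lo hi : Z) : Prop :=
  exists s l, P s /\ nn_path P s l /\ coord s = lo /\ coord (last l s) = hi.

Definition internally_crossed (E : site -> Prop) (B : block) : Prop :=
  let P := fun s => E s /\ in_block B s in
  crosses P cx (bx1 B) (bx2 B) /\ crosses P cy (by1 B) (by2 B)
  /\ crosses P cz (bz1 B) (bz2 B).

Definition weakly_crossed (a b c : nat) (A : site -> Prop) (B : block) : Prop :=
  internally_crossed (weak_enhancement a b c (restrict A B)) B.

(* Main.v *)
Require Import Defs.
From Stdlib Require Import ZArith List Lia Classical.
Import ListNotations.
Open Scope Z_scope.

Fixpoint cl_ind (a b c : nat) (rho : site -> Prop) (P : site -> Prop)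
  (Hi : forall x, rho x -> P x)
  (Hs : forall x l, NoDup l -> (a + b + c <= length l)%nat ->
        (forall y, In y l -> nbr a b c x y /\ closure a b c rho y /\ P y) -> P x)
  x (H : closure a b c rho x) {struct H} : P x :=
  match H with
  | cl_init _ _ _ _ x h => Hi x h
  | cl_step _ _ _ _ x l nd len f =>
      Hs x l nd len (fun y i => match f y i with
                                | conj n cy => conj n (conj cy (cl_ind a b c rho P Hi Hs y cy)) end)
  end.

Lemma cl_mono a b c (P Q : site -> Prop) : (forall s, P s -> Q s) ->
  forall s, closure a b c P s -> closure a b c Q s.
Proof.
  intros HPQ. apply cl_ind.
  - intros x Hx. apply cl_init; auto.
  - intros x l nd len H. apply (cl_step _ _ _ _ x l nd len).
    intros y Hy. destruct (H y Hy) as [? [? ?]]; auto.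
Qed.

Definition cand (x d : site) (n : nat) : list site :=
  map (fun i : nat => add x (scale (Z.of_nat i + 1) d)) (seq 0 n).

Lemma count_cand (x d : site) n (l : list site) : NoDup l ->
  (forall y, In y l -> In y (cand x d n)) -> (length l <= n)%nat.
Proof.
  intros nd H. pose proof (NoDup_incl_length nd H) as Hl.
  unfold cand in Hl. rewrite length_map, length_seq in Hl. exact Hl.
Qed.

Lemma in_cand x d n (i : Z) : 1 <= i <= Z.of_nat n -> In (add x (scale i d)) (cand x d n).
Proof.
  intros Hi. unfold cand. apply in_map_iff. exists (Z.to_nat (i - 1)). split.
  - f_equal. f_equal. lia.
  - apply in_seq. lia.
Qed.

Lemma in_block_dec B s : in_block B s \/ ~ in_block B s.
Proof. apply classic. Qed.

Lemma box_closed a b c (rho : site -> Prop) B : (1 <= a)%nat -> (1 <= b)%nat -> (1 <= c)%nat ->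
  (forall s, rho s -> in_block B s) -> forall s, closure a b c rho s -> in_block B s.
Proof.
  intros Ha Hb Hc Hr. apply cl_ind; [exact Hr|].
  intros x l nd len H.
  destruct x as [[x1 x2] x3]. destruct B as [p1 p2 q1 q2 r1 r2].
  unfold in_block; simpl.
  assert (HY : forall y, In y l -> in_block (Block p1 p2 q1 q2 r1 r2) y /\ nbr a b c (x1,x2,x3) y)
    by (intros y Hy; destruct (H y Hy) as [? [? ?]]; auto).
  clear H.
  destruct (Z_lt_le_dec x1 p1) as [h|h1].
  { exfalso. assert (length l <= a)%nat; [|lia].
    apply (count_cand (x1,x2,x3) (1,0,0) a l nd). intros y Hy.
    destruct (HY y Hy) as [[? [? ?]] [[i [Hi ->]]|[[j [Hj ->]]|[k [Hk ->]]]]]; simpl in *; try lia.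
    replace (x1 + i, x2 + 0, x3 + 0) with (add (x1,x2,x3) (scale i (1,0,0))) by (simpl; f_equal; [f_equal|]; lia).
    apply in_cand. lia. }
  destruct (Z_lt_le_dec p2 x1) as [h|h2].
  { exfalso. assert (length l <= a)%nat; [|lia].
    apply (count_cand (x1,x2,x3) (-1,0,0) a l nd). intros y Hy.
    destruct (HY y Hy) as [[? [? ?]] [[i [Hi ->]]|[[j [Hj ->]]|[k [Hk ->]]]]]; simpl in *; try lia.
    replace (x1 + i, x2 + 0, x3 + 0) with (add (x1,x2,x3) (scale (-i) (-1,0,0))) by (simpl; f_equal; [f_equal|]; lia).
    apply in_cand. lia. }
  destruct (Z_lt_le_dec x2 q1) as [h|h3].
  { exfalso. assert (length l <= b)%nat; [|lia].
    apply (count_cand (x1,x2,x3) (0,1,0) b l nd). intros y Hy.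
    destruct (HY y Hy) as [[? [? ?]] [[i [Hi ->]]|[[j [Hj ->]]|[k [Hk ->]]]]]; simpl in *; try lia.
    replace (x1 + 0, x2 + j, x3 + 0) with (add (x1,x2,x3) (scale j (0,1,0))) by (simpl; f_equal; [f_equal|]; lia).
    apply in_cand. lia. }
  destruct (Z_lt_le_dec q2 x2) as [h|h4].
  { exfalso. assert (length l <= b)%nat; [|lia].
    apply (count_cand (x1,x2,x3) (0,-1,0) b l nd). intros y Hy.
    destruct (HY y Hy) as [[? [? ?]] [[i [Hi ->]]|[[j [Hj ->]]|[k [Hk ->]]]]]; simpl in *; try lia.
    replace (x1 + 0, x2 + j, x3 + 0) with (add (x1,x2,x3) (scale (-j) (0,-1,0))) by (simpl; f_equal; [f_equal|]; lia).
    apply in_cand. lia. }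
  destruct (Z_lt_le_dec x3 r1) as [h|h5].
  { exfalso. assert (length l <= c)%nat; [|lia].
    apply (count_cand (x1,x2,x3) (0,0,1) c l nd). intros y Hy.
    destruct (HY y Hy) as [[? [? ?]] [[i [Hi ->]]|[[j [Hj ->]]|[k [Hk ->]]]]]; simpl in *; try lia.
    replace (x1 + 0, x2 + 0, x3 + k) with (add (x1,x2,x3) (scale k (0,0,1))) by (simpl; f_equal; [f_equal|]; lia).
    apply in_cand. lia. }
  destruct (Z_lt_le_dec r2 x3) as [h|h6].
  { exfalso. assert (length l <= c)%nat; [|lia].
    apply (count_cand (x1,x2,x3) (0,0,-1) c l nd). intros y Hy.
    destruct (HY y Hy) as [[? [? ?]] [[i [Hi ->]]|[[j [Hj ->]]|[k [Hk ->]]]]]; simpl in *; try lia.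
    replace (x1 + 0, x2 + 0, x3 + k) with (add (x1,x2,x3) (scale (-k) (0,0,-1))) by (simpl; f_equal; [f_equal|]; lia).
    apply in_cand. lia. }
  lia.
Qed.

Inductive reach (P : site -> Prop) : site -> site -> Prop :=
| r_refl : forall s, reach P s s
| r_step : forall s t u, adjacent s t -> P t -> reach P t u -> reach P s u.

Lemma reach_trans P s t u : reach P s t -> reach P t u -> reach P s u.
Proof. induction 1; intros; auto. eapply r_step; eauto. Qed.

Lemma reach_mono (P Q : site -> Prop) s t : (forall x, P x -> Q x) -> reach P s t -> reach Q s t.
Proof. intros H; induction 1. constructor. eapply r_step; eauto. Qed.

Lemma adjacent_sym s t : adjacent s t -> adjacent t s.
Proof.
  intros [e [He ->]]. destruct s as [[x y] z].
  destruct He as [-> | [-> | [-> | [-> | [-> | -> ]]]]]; simpl;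
  [exists (-1,0,0)|exists (1,0,0)|exists (0,-1,0)|exists (0,1,0)|exists (0,0,-1)|exists (0,0,1)];
  unfold unit_dir; simpl; (split; [tauto| f_equal; [f_equal|]; lia]).
Qed.

Lemma reach_sym P s u : P s -> reach P s u -> reach P u s.
Proof.
  intros Ps H. induction H. constructor.
  apply reach_trans with t; auto. eapply r_step; [apply adjacent_sym; eauto| auto | constructor].
Qed.

Lemma last_cons_default (l : list site) t s : last (t :: l) s = last l t.
Proof. revert t s. induction l as [|a0 l IH]; intros t s; auto.
  change (last (a0 :: l) s = last (a0 :: l) t). rewrite !IH. auto. Qed.

Lemma reach_path P s u : reach P s u -> exists l, nn_path P s l /\ last l s = u.
Proof.
  induction 1. exists nil; simpl; auto.
  destruct IHreach as [l' [Hp Hl]]. exists (t :: l'). split. simpl; auto.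
  rewrite last_cons_default. auto.
Qed.

Definition conn (C : site -> Prop) := forall u v, C u -> C v -> reach C u v.

Lemma add_zero x : add x (scale 0 (0,0,0)) = x.
Proof. destruct x as [[? ?] ?]; simpl; f_equal; [f_equal|]; lia. Qed.

Lemma seg_reach (P : site -> Prop) x e (n : nat) : unit_dir e ->
  (forall m, 0 <= m <= Z.of_nat n -> P (add x (scale m e))) ->
  reach P x (add x (scale (Z.of_nat n) e)).
Proof.
  intros He. induction n; intros H.
  - replace (add x (scale (Z.of_nat 0) e)) with x. constructor.
    destruct x as [[? ?] ?], e as [[? ?] ?]; simpl; f_equal; [f_equal|]; lia.
  - apply reach_trans with (add x (scale (Z.of_nat n) e)).
    + apply IHn. intros m Hm; apply H; lia.
    + apply r_step with (t := add x (scale (Z.of_nat (S n)) e)); [| apply H; lia | constructor].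
      exists e; split; auto.
      rewrite Nat2Z.inj_succ; destruct x as [[? ?] ?], e as [[? ?] ?]; unfold add, scale; f_equal; [f_equal|]; lia.
Qed.

Lemma nbr_dir a b c x y : (a <= c)%nat -> (b <= c)%nat -> nbr a b c x y ->
  exists e n, unit_dir e /\ 1 <= n <= Z.of_nat c /\ y = add x (scale n e).
Proof.
  intros Hac Hbc H. unfold unit_dir.
  destruct x as [[x1 x2] x3].
  destruct H as [[i [Hi ->]]|[[i [Hi ->]]|[i [Hi ->]]]];
  (destruct (Z_lt_le_dec 0 i)).
  - exists (1,0,0), i. split; [tauto|]; split; [lia|]; unfold add, scale; f_equal; try f_equal; lia.
  - exists (-1,0,0), (-i). split; [tauto|]; split; [lia|]; unfold add, scale; f_equal; try f_equal; lia.
  - exists (0,1,0), i. split; [tauto|]; split; [lia|]; unfold add, scale; f_equal; try f_equal; lia.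
  - exists (0,-1,0), (-i). split; [tauto|]; split; [lia|]; unfold add, scale; f_equal; try f_equal; lia.
  - exists (0,0,1), i. split; [tauto|]; split; [lia|]; unfold add, scale; f_equal; try f_equal; lia.
  - exists (0,0,-1), (-i). split; [tauto|]; split; [lia|]; unfold add, scale; f_equal; try f_equal; lia.
Qed.

Lemma zmax (P : Z -> Prop) M z0 : P z0 -> (forall z, P z -> z <= M) ->
  exists m, P m /\ forall z, P z -> z <= m.
Proof.
  intros H0 HM.
  assert (G : forall n : nat, forall z, P z -> (Z.to_nat (M - z) <= n)%nat ->
             exists m, P m /\ forall z, P z -> z <= m).
  { induction n; intros z Pz Hn.
    - exists z; split; auto. intros z' Pz'. pose proof (HM z' Pz'). pose proof (HM z Pz). lia.
    - destruct (classic (exists z', P z' /\ z < z')) as [[z' [Pz' Hz']]|Hno].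
      + apply (IHn z' Pz'). pose proof (HM z' Pz'). lia.
      + exists z; split; auto. intros z' Pz'. destruct (Z_le_gt_dec z' z); auto.
        exfalso; apply Hno; exists z'; split; auto; lia. }
  exact (G _ z0 H0 (le_n _)).
Qed.

Lemma zmin (P : Z -> Prop) M z0 : P z0 -> (forall z, M <= z -> True) -> (forall z, P z -> M <= z) ->
  exists m, P m /\ forall z, P z -> m <= z.
Proof.
  intros H0 _ HM. destruct (zmax (fun z => P (- z)) (- M) (- z0)) as [m [Pm Hm]].
  - rewrite Z.opp_involutive; auto.
  - intros z Pz. specialize (HM _ Pz). lia.
  - exists (- m). split; auto. intros z Pz. specialize (Hm (- z)). rewrite Z.opp_involutive in Hm. specialize (Hm Pz). lia.
Qed.

Definition faces (C : site -> Prop) (B : block) : Prop :=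
  (exists s, C s /\ cx s = bx1 B) /\ (exists s, C s /\ cx s = bx2 B) /\
  (exists s, C s /\ cy s = by1 B) /\ (exists s, C s /\ cy s = by2 B) /\
  (exists s, C s /\ cz s = bz1 B) /\ (exists s, C s /\ cz s = bz2 B).

Lemma bbox (C : site -> Prop) D s0 : C s0 -> (forall s, C s -> in_block D s) ->
  exists B, (forall s, C s -> in_block B s) /\ faces C B /\ block_sub B D.
Proof.
  intros H0 HD.
  destruct (zmin (fun z => exists s, C s /\ cx s = z) (bx1 D) (cx s0)) as [x1 [[sx1 [Cx1 Ex1]] Hx1]];
    [eauto | auto | intros z [s [Cs <-]]; destruct (HD s Cs) as [? [? ?]]; lia|].
  destruct (zmax (fun z => exists s, C s /\ cx s = z) (bx2 D) (cx s0)) as [x2 [[sx2 [Cx2 Ex2]] Hx2]];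
    [eauto | intros z [s [Cs <-]]; destruct (HD s Cs) as [? [? ?]]; lia|].
  destruct (zmin (fun z => exists s, C s /\ cy s = z) (by1 D) (cy s0)) as [y1 [[sy1 [Cy1 Ey1]] Hy1]];
    [eauto | auto | intros z [s [Cs <-]]; destruct (HD s Cs) as [? [? ?]]; lia|].
  destruct (zmax (fun z => exists s, C s /\ cy s = z) (by2 D) (cy s0)) as [y2 [[sy2 [Cy2 Ey2]] Hy2]];
    [eauto | intros z [s [Cs <-]]; destruct (HD s Cs) as [? [? ?]]; lia|].
  destruct (zmin (fun z => exists s, C s /\ cz s = z) (bz1 D) (cz s0)) as [z1 [[sz1 [Cz1 Ez1]] Hz1]];
    [eauto | auto | intros z [s [Cs <-]]; destruct (HD s Cs) as [? [? ?]]; lia|].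
  destruct (zmax (fun z => exists s, C s /\ cz s = z) (bz2 D) (cz s0)) as [z2 [[sz2 [Cz2 Ez2]] Hz2]];
    [eauto | intros z [s [Cs <-]]; destruct (HD s Cs) as [? [? ?]]; lia|].
  exists (Block x1 x2 y1 y2 z1 z2). split; [|split].
  - intros s Cs. unfold in_block; simpl.
    pose proof (Hx1 _ (ex_intro _ s (conj Cs eq_refl))).
    pose proof (Hx2 _ (ex_intro _ s (conj Cs eq_refl))).
    pose proof (Hy1 _ (ex_intro _ s (conj Cs eq_refl))).
    pose proof (Hy2 _ (ex_intro _ s (conj Cs eq_refl))).
    pose proof (Hz1 _ (ex_intro _ s (conj Cs eq_refl))).
    pose proof (Hz2 _ (ex_intro _ s (conj Cs eq_refl))). lia.
  - unfold faces; simpl; repeat split; eauto.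
  - destruct (HD _ Cx1) as [? [? ?]]. destruct (HD _ Cx2) as [? [? ?]].
    destruct (HD _ Cy1) as [? [? ?]]. destruct (HD _ Cy2) as [? [? ?]].
    destruct (HD _ Cz1) as [? [? ?]]. destruct (HD _ Cz2) as [? [? ?]].
    unfold block_sub; simpl. lia.
Qed.

Lemma faces_sub (C : site -> Prop) B H : faces C B -> (forall s, C s -> in_block H s) -> block_sub B H.
Proof.
  intros [[s1 [C1 E1]] [[s2 [C2 E2]] [[s3 [C3 E3]] [[s4 [C4 E4]] [[s5 [C5 E5]] [s6 [C6 E6]]]]]]] HH.
  pose proof (HH _ C1); pose proof (HH _ C2); pose proof (HH _ C3);
  pose proof (HH _ C4); pose proof (HH _ C5); pose proof (HH _ C6).
  unfold in_block, block_sub in *. lia.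
Qed.

Definition near (R : Z) (p s : site) : Prop :=
  Z.abs (cx s - cx p) <= R /\ Z.abs (cy s - cy p) <= R /\ Z.abs (cz s - cz p) <= R.

Lemma ls_x B : bx2 B - bx1 B <= longest_side B.
Proof. unfold longest_side. apply Z.le_max_l. Qed.
Lemma ls_y B : by2 B - by1 B <= longest_side B.
Proof. unfold longest_side. eapply Z.le_trans; [|apply Z.le_max_r]. apply Z.le_max_l. Qed.
Lemma ls_z B : bz2 B - bz1 B <= longest_side B.
Proof. unfold longest_side. eapply Z.le_trans; [|apply Z.le_max_r]. apply Z.le_max_r. Qed.
Lemma ls_max B K : bx2 B - bx1 B <= K -> by2 B - by1 B <= K -> bz2 B - bz1 B <= K -> longest_side B <= K.
Proof. intros. unfold longest_side. repeat apply Z.max_lub; auto. Qed.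

Lemma side_bound (C : site -> Prop) B R p : faces C B -> (forall s, C s -> near R p s) ->
  longest_side B <= 2 * R.
Proof.
  intros [[s1 [C1 E1]] [[s2 [C2 E2]] [[s3 [C3 E3]] [[s4 [C4 E4]] [[s5 [C5 E5]] [s6 [C6 E6]]]]]]] HH.
  destruct (HH _ C1) as [N1 _]. destruct (HH _ C2) as [N2 _].
  destruct (HH _ C3) as [_ [N3 _]]. destruct (HH _ C4) as [_ [N4 _]].
  destruct (HH _ C5) as [_ [_ N5]]. destruct (HH _ C6) as [_ [_ N6]].
  apply ls_max.
  - rewrite <- E1, <- E2. apply Z.abs_le in N1. apply Z.abs_le in N2. lia.
  - rewrite <- E3, <- E4. apply Z.abs_le in N3. apply Z.abs_le in N4. lia.
  - rewrite <- E5, <- E6. apply Z.abs_le in N5. apply Z.abs_le in N6. lia.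
Qed.

Lemma in_block_side B s t : in_block B s -> in_block B t ->
  Z.abs (cx s - cx t) <= longest_side B /\ Z.abs (cy s - cy t) <= longest_side B /\
  Z.abs (cz s - cz t) <= longest_side B.
Proof.
  intros [X1 [X2 X3]] [Y1 [Y2 Y3]]. pose proof (ls_x B). pose proof (ls_y B). pose proof (ls_z B).
  split; [|split]; apply Z.abs_le; lia.
Qed.

Definition seg (x y s : site) : Prop :=
  exists e n m, unit_dir e /\ y = add x (scale n e) /\ s = add x (scale m e) /\ 0 <= m <= n.

Definition betw (u v w : Z) := (u <= w <= v) \/ (v <= w <= u).

Lemma seg_between x y s : seg x y s ->
  betw (cx x) (cx y) (cx s) /\ betw (cy x) (cy y) (cy s) /\ betw (cz x) (cz y) (cz s).
Proof.
  intros [e [n [m [He [-> [-> Hm]]]]]]. destruct x as [[x1 x2] x3]. unfold betw.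
  destruct He as [-> | [-> | [-> | [-> | [-> | -> ]]]]]; unfold add, scale, cx, cy, cz;
  repeat split; lia.
Qed.

Lemma seg_in_box B x y s : in_block B x -> in_block B y -> seg x y s -> in_block B s.
Proof.
  intros [X1 [X2 X3]] [Y1 [Y2 Y3]] Hs. apply seg_between in Hs. destruct Hs as [S1 [S2 S3]].
  unfold betw in *. split; [|split]; lia.
Qed.

Lemma seg_near R x y s : near R x y -> seg x y s -> near R x s.
Proof.
  intros [Y1 [Y2 Y3]] Hs. apply seg_between in Hs. destruct Hs as [S1 [S2 S3]].
  apply Z.abs_le in Y1, Y2, Y3.
  unfold betw in *. split; [|split]; apply Z.abs_le; lia.
Qed.

Lemma nbr_near a b c x y : (a <= c)%nat -> (b <= c)%nat -> nbr a b c x y -> near (Z.of_nat c) x y.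
Proof.
  intros Hac Hbc H. destruct x as [[x1 x2] x3].
  destruct H as [[i [Hi ->]]|[[i [Hi ->]]|[i [Hi ->]]]]; unfold near, add, cx, cy, cz; lia.
Qed.

Definition Eh a b c (A : site -> Prop) B := weak_enhancement a b c (restrict A B).

Definition good a b c (A : site -> Prop) (l : nat) (B : block) (C : site -> Prop) : Prop :=
  conn C /\ (forall s, C s -> Eh a b c A B s /\ in_block B s) /\ faces C B /\ block_sub B (cube l).

Lemma good_crossed a b c A l B C : good a b c A l B C ->
  valid_block B /\ block_sub B (cube l) /\ weakly_crossed a b c A B.
Proof.
  intros [Hc [HE [Hf Hs]]]. split; [|split; auto].
  - destruct Hf as [[s1 [C1 E1]] [[s2 [C2 E2]] [[s3 [C3 E3]] [[s4 [C4 E4]] [[s5 [C5 E5]] [s6 [C6 E6]]]]]]].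
    destruct (HE _ C1) as [_ H1]. unfold in_block, valid_block in *. lia.
  - assert (Hr : forall u v, C u -> C v -> exists l0, nn_path (fun s => weak_enhancement a b c (restrict A B) s /\ in_block B s) u l0 /\ last l0 u = v).
    { intros u v Cu Cv. apply reach_path. eapply reach_mono; [| apply Hc; eauto]. exact HE. }
    destruct Hf as [[s1 [C1 E1]] [[s2 [C2 E2]] [[s3 [C3 E3]] [[s4 [C4 E4]] [[s5 [C5 E5]] [s6 [C6 E6]]]]]]].
    unfold weakly_crossed, internally_crossed, crosses.
    split; [|split].
    + destruct (Hr _ _ C1 C2) as [l0 [Hp Hl]]. exists s1, l0. rewrite Hl. split; [apply HE; auto|]. auto.
    + destruct (Hr _ _ C3 C4) as [l0 [Hp Hl]]. exists s3, l0. rewrite Hl. split; [apply HE; auto|]. auto.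
    + destruct (Hr _ _ C5 C6) as [l0 [Hp Hl]]. exists s5, l0. rewrite Hl. split; [apply HE; auto|]. auto.
Qed.

Lemma Eh_mono a b c A B H s : (1 <= a)%nat -> (1 <= b)%nat -> (1 <= c)%nat ->
  block_sub B H -> Eh a b c A B s -> Eh a b c A H s.
Proof.
  intros Ha Hb Hc Hsub.
  assert (HR : forall t, restrict A B t -> restrict A H t).
  { intros t [At Bt]. split; auto. unfold in_block, block_sub in *. lia. }
  intros [Hcl | [x [y [Hx [Hnx [Hn [Hy Hseg]]]]]]].
  - left. eapply cl_mono; eauto.
  - right. exists x, y. repeat split; auto.
    + eapply cl_mono; eauto.
    + intros [Ax Hx']. apply Hnx. split; auto.
      eapply box_closed; [exact Ha|exact Hb|exact Hc| |exact Hx]. intros t [_ Bt]; auto.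
    + eapply cl_mono; eauto.
Qed.

Definition Done a b c (A : site -> Prop) (l k : nat) : Prop :=
  exists B, valid_block B /\ block_sub B (cube l) /\
    (Z.of_nat k <= longest_side B <= Z.of_nat (2 * k + 2 * c)) /\ weakly_crossed a b c A B.

Definition small a b c A l (k : nat) B C := good a b c A l B C /\ longest_side B < Z.of_nat k.

Definition U a b c A l k (s : site) : Prop :=
  exists B C, small a b c A l k B C /\ C s /\ closure a b c (restrict A B) s.

Lemma to_small a b c A l k B C : ~ Done a b c A l k -> good a b c A l B C ->
  longest_side B <= Z.of_nat (2 * k + 2 * c) -> small a b c A l k B C.
Proof.
  intros ND G Hs. split; auto. destruct (Z_lt_le_dec (longest_side B) (Z.of_nat k)); auto.
  exfalso; apply ND. destruct (good_crossed _ _ _ _ _ _ _ G) as [? [? ?]]. exists B; auto.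
Qed.

Lemma sub_in B D s : block_sub B D -> in_block B s -> in_block D s.
Proof. unfold block_sub, in_block. lia. Qed.

Lemma near_tri R1 R2 x y s : near R1 x y -> near R2 y s -> near (R1 + R2) x s.
Proof.
  intros [X1 [X2 X3]] [Y1 [Y2 Y3]]. apply Z.abs_le in X1, X2, X3, Y1, Y2, Y3.
  split; [|split]; apply Z.abs_le; lia.
Qed.

Lemma near_weak R1 R2 x s : R1 <= R2 -> near R1 x s -> near R2 x s.
Proof. intros H [X1 [X2 X3]]. split; [|split]; lia. Qed.

Lemma near_refl R x : 0 <= R -> near R x x.
Proof. intros H. unfold near. rewrite !Z.sub_diag. simpl. lia. Qed.

Lemma in_block_near B s t : in_block B s -> in_block B t -> near (longest_side B) s t.
Proof.
  intros Hs Ht. destruct (in_block_side B t s Ht Hs) as [X1 [X2 X3]]. split; [|split]; auto.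
Qed.

Lemma adj_near s t : adjacent s t -> near 1 s t.
Proof.
  intros [e [He ->]]. destruct s as [[x y] z].
  destruct He as [-> | [-> | [-> | [-> | [-> | -> ]]]]]; unfold near, add, cx, cy, cz;
  repeat split; apply Z.abs_le; lia.
Qed.

Lemma singleton a b c A l k s : (1 <= k)%nat -> A s -> in_block (cube l) s ->
  small a b c A l k (Block (cx s) (cx s) (cy s) (cy s) (cz s) (cz s)) (fun t => t = s) /\
  closure a b c (restrict A (Block (cx s) (cx s) (cy s) (cy s) (cz s) (cz s))) s.
Proof.
  intros Hk As Hc.
  assert (Hb : in_block (Block (cx s) (cx s) (cy s) (cy s) (cz s) (cz s)) s)
    by (unfold in_block; simpl; lia).
  assert (Hcl : closure a b c (restrict A (Block (cx s) (cx s) (cy s) (cy s) (cz s) (cz s))) s)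
    by (apply cl_init; split; auto).
  split; auto. split.
  - split; [|split; [|split]].
    + intros u v -> ->. constructor.
    + intros t ->. split; auto. left; auto.
    + unfold faces; simpl; repeat split; exists s; auto.
    + unfold block_sub, cube, in_block in *; simpl in *. lia.
  - unfold longest_side; simpl. rewrite !Z.sub_diag. simpl. lia.
Qed.

Lemma add_scale0 x e : add x (scale 0 e) = x.
Proof. destruct x as [[? ?] ?], e as [[? ?] ?]; unfold add, scale; f_equal; [f_equal|]; lia. Qed.


Lemma U_closed a b c A l k (Ha : (1 <= a)%nat) (Hab : (a <= b)%nat) (Hbc : (b <= c)%nat)
  (Hk : (1 <= k)%nat) : ~ Done a b c A l k ->
  forall s, closure a b c (restrict A (cube l)) s -> U a b c A l k s.
Proof.
  intros ND. apply cl_ind.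
  - intros x [Ax Cx]. destruct (singleton a b c A l k x Hk Ax Cx) as [H1 H2].
    do 2 eexists; split; [exact H1|]. split; auto.
  - intros x ls nd len HY.
    assert (Hac : (a <= c)%nat) by lia. assert (Hbc' : (b <= c)%nat) by lia.
    assert (Hb1 : (1 <= b)%nat) by lia. assert (Hc1 : (1 <= c)%nat) by lia.
    assert (Xcube : in_block (cube l) x).
    { apply (box_closed a b c (restrict A (cube l))); auto. intros t [_ Ht]; auto.
      apply (cl_step _ _ _ _ x ls nd len). intros y Hy. destruct (HY y Hy) as [? [? ?]]; auto. }
    destruct (classic (A x)) as [Ax|nAx].
    { destruct (singleton a b c A l k x Hk Ax Xcube) as [H1 H2].
      do 2 eexists; split; [exact H1|]. split; auto. }
    set (Cf := fun s => s = x \/ exists y, In y ls /\ exists B C, small a b c A l k B C /\ C y /\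
                   closure a b c (restrict A B) y /\ (C s \/ seg x y s)).
    assert (Hpair : forall y B C, In y ls -> small a b c A l k B C -> C y ->
                   closure a b c (restrict A B) y -> forall s, C s -> Cf s).
    { intros y B C Hy Hs Cy Cly s0 Cs. right. exists y; split; auto. exists B, C; auto. }
    assert (Hcube : forall s, Cf s -> in_block (cube l) s).
    { intros s [->|[y [Hy [B [C [[[_ [HE [_ Hsub]]] _] [Cy [_ [Cs|Sg]]]]]]]]]; auto.
      - apply (sub_in B); auto. apply HE; auto.
      - apply (seg_in_box _ x y); auto. apply (sub_in B); auto. apply HE; auto. }
    destruct (bbox Cf (cube l) x (or_introl eq_refl) Hcube) as [H [HinH [Hf Hsub]]].
    assert (HBH : forall y B C, In y ls -> small a b c A l k B C -> C y ->
                   closure a b c (restrict A B) y -> block_sub B H).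
    { intros y B C Hy Hs Cy Cly. apply (faces_sub C); [apply Hs|].
      intros s Cs. apply HinH. eapply Hpair; eauto. }
    assert (Xcl : closure a b c (restrict A H) x).
    { apply (cl_step _ _ _ _ x ls nd len). intros y Hy. destruct (HY y Hy) as [Hn [_ HU]].
      split; auto. destruct HU as [B [C [Hs [Cy Cly]]]].
      eapply cl_mono; [|exact Cly]. intros t [At Bt]. split; auto.
      eapply sub_in; [|exact Bt]. eapply HBH; eauto. }
    assert (HE : forall s, Cf s -> Eh a b c A H s).
    { intros s [->|[y [Hy [B [C [Hs [Cy [Cly [Cs|Sg]]]]]]]]].
      - left; auto.
      - apply (Eh_mono a b c A B H); auto. eapply HBH; eauto. apply Hs; auto.
      - destruct Sg as [e [n [m [He [Ey [Es Hm]]]]]].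
        assert (Ycl : closure a b c (restrict A H) y).
        { eapply cl_mono; [|exact Cly]. intros t [At Bt]. split; auto.
          eapply sub_in; [|exact Bt]. eapply HBH; eauto. }
        destruct (Z.eq_dec m 0) as [->|m0].
        { left. rewrite Es, add_scale0. auto. }
        destruct (Z.eq_dec m n) as [->|mn].
        { left. rewrite Es, <- Ey. auto. }
        right. exists x, y. split; [auto|]. split; [intros [Ax _]; auto|].
        split; [apply (HY y Hy)|]. split; auto.
        exists e, n, m. split; auto. split; auto. split; auto. lia. }
    assert (Hreach : forall s, Cf s -> reach Cf x s).
    { assert (Ry : forall y, In y ls -> (exists B C, small a b c A l k B C /\ C y /\
                   closure a b c (restrict A B) y) -> reach Cf x y).
      { intros y Hy [B [C [Hs [Cy Cly]]]].
        destruct (nbr_dir a b c x y Hac Hbc' (proj1 (HY y Hy))) as [e [n [He [Hn Ey]]]].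
        replace y with (add x (scale (Z.of_nat (Z.to_nat n)) e)) by (rewrite Z2Nat.id by lia; auto).
        apply seg_reach; auto. intros m Hm. right. exists y; split; auto. exists B, C.
        split; auto. split; auto. split; auto. right. exists e, n, m. split; auto. split; auto.
        split; auto. lia. }
      intros s [->|[y [Hy [B [C [Hs [Cy [Cly [Cs|Sg]]]]]]]]].
      - constructor.
      - apply reach_trans with y. apply Ry; eauto.
        eapply reach_mono; [|apply Hs; auto]. intros t Ct. eapply Hpair; eauto.
      - destruct Sg as [e [n [m [He [Ey [Es Hm]]]]]].
        replace s with (add x (scale (Z.of_nat (Z.to_nat m)) e)) by (rewrite Z2Nat.id by lia; auto).
        apply seg_reach; auto. intros m' Hm'. right. exists y; split; auto. exists B, C.
        split; auto. split; auto. split; auto. right. exists e, n, m'. split; auto. split; auto.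
        split; auto. lia. }
    assert (Gd : good a b c A l H Cf).
    { split; [|split; [|split]]; auto.
      - intros u v Cu Cv. apply reach_trans with x.
        + apply reach_sym; [left; reflexivity | apply Hreach; auto].
        + apply Hreach; auto. }
    assert (Hnear : forall s, Cf s -> near (Z.of_nat c + Z.of_nat k) x s).
    { intros s [->|[y [Hy [B [C [Hs [Cy [Cly [Cs|Sg]]]]]]]]].
      - apply near_refl. lia.
      - pose proof (nbr_near a b c x y Hac Hbc' (proj1 (HY y Hy))).
        destruct Hs as [[_ [HEC _]] Hlt].
        pose proof (in_block_near B y s (proj2 (HEC y Cy)) (proj2 (HEC s Cs))).
        eapply near_weak; [|eapply near_tri; eauto]. lia.
      - pose proof (nbr_near a b c x y Hac Hbc' (proj1 (HY y Hy))).
        eapply near_weak; [|eapply seg_near; eauto]. lia. }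
    pose proof (side_bound Cf H _ x Hf Hnear).
    exists H, Cf. split; [apply to_small; auto; lia|]. split; [left; auto|]. auto.
Qed.

Lemma merge_adj a b c A l k B C B' C' s s' (Ha : (1 <= a)%nat) (Hab : (a <= b)%nat) (Hbc : (b <= c)%nat) :
  ~ Done a b c A l k -> small a b c A l k B C -> C s -> small a b c A l k B' C' -> C' s' ->
  adjacent s s' ->
  exists H, small a b c A l k H (fun t => C t \/ C' t) /\ (forall t, C t \/ C' t -> in_block H t).
Proof.
  intros ND [[Cc [CE [Cf Cs]]] Cl] Hs [[Cc' [CE' [Cf' Cs']]] Cl'] Hs' Hadj.
  set (Cm := fun t => C t \/ C' t).
  assert (Hcube : forall t, Cm t -> in_block (cube l) t).
  { intros t [Ct|Ct]; [apply (sub_in B)|apply (sub_in B')]; auto; [apply CE|apply CE']; auto. }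
  destruct (bbox Cm (cube l) s (or_introl Hs) Hcube) as [H [HinH [Hf Hsub]]].
  assert (BH : block_sub B H) by (apply (faces_sub C); auto; intros t Ct; apply HinH; left; auto).
  assert (BH' : block_sub B' H) by (apply (faces_sub C'); auto; intros t Ct; apply HinH; right; auto).
  assert (Hnear : forall t, Cm t -> near (Z.of_nat k + 1) s t).
  { intros t [Ct|Ct].
    - pose proof (in_block_near B s t (proj2 (CE s Hs)) (proj2 (CE t Ct))).
      eapply near_weak; [|exact H0]. lia.
    - pose proof (in_block_near B' s' t (proj2 (CE' s' Hs')) (proj2 (CE' t Ct))).
      pose proof (adj_near s s' Hadj).
      eapply near_weak; [|eapply near_tri; eauto]. lia. }
  pose proof (side_bound Cm H _ s Hf Hnear).
  exists H. split; auto.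
  apply to_small; auto; [|lia].
  split; [|split; [|split]]; auto.
  - assert (R1 : forall u, C u -> reach Cm s u).
    { intros u Cu. eapply reach_mono; [|apply Cc; eauto]. intros t Ct; left; auto. }
    assert (R2 : forall u, C' u -> reach Cm s u).
    { intros u Cu. eapply r_step; [exact Hadj| right; auto|].
      eapply reach_mono; [|apply Cc'; eauto]. intros t Ct; right; auto. }
    assert (R : forall u, Cm u -> reach Cm s u) by (intros u [Cu|Cu]; auto).
    intros u v Cu Cv. apply reach_trans with s; auto. apply reach_sym; [left; auto | auto].
  - intros t [Ct|Ct].
    + split; [|apply HinH; left; auto].
      apply (Eh_mono a b c A B H); auto; try lia. apply CE; auto.
    + split; [|apply HinH; right; auto].
      apply (Eh_mono a b c A B' H); auto; try lia. apply CE'; auto.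
Qed.

Lemma extent a b c A l k (Ha : (1 <= a)%nat) (Hab : (a <= b)%nat) (Hbc : (b <= c)%nat)
  (Hk : (1 <= k)%nat) (Hkl : (2 * k + 2 * c <= l)%nat) :
  ~ Done a b c A l k -> (forall s, in_block (cube l) s -> U a b c A l k s) ->
  forall n : nat, (n <= k)%nat -> exists B C, small a b c A l k B C /\ Z.of_nat n <= bx2 B - bx1 B.
Proof.
  intros ND HU. induction n; intros Hn.
  - destruct (HU (0,0,0)) as [B [C [Hs _]]]. { unfold in_block, cube; simpl. lia. }
    exists B, C. split; auto. destruct (good_crossed _ _ _ _ _ _ _ (proj1 Hs)) as [[? _] _]. lia.
  - destruct (IHn ltac:(lia)) as [B [C [Hs Hext]]].
    destruct (Z_le_gt_dec (Z.of_nat (S n)) (bx2 B - bx1 B)) as [?|Hlt]; [exists B, C; auto|].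
    pose proof Hs as [[Cc [CE [Cf Csub]]] Cl].
    destruct Cf as [[s1 [C1 E1]] [[s2 [C2 E2]] _]].
    pose proof (ls_x B).
    unfold block_sub, cube in Csub; simpl in Csub.
    destruct (Z_lt_le_dec (bx2 B) (Z.of_nat l)) as [Hr|Hr].
    + set (s' := add s2 (1,0,0)).
      assert (Ad : adjacent s2 s') by (exists (1,0,0); split; [left; auto|auto]).
      destruct (HU s') as [B' [C' [Hs' [Cs' _]]]].
      { destruct (CE s2 C2) as [_ [X [Y Z0]]]. subst s'. destruct s2 as [[x y] z].
        unfold in_block, cube, add, cx, cy, cz in *; simpl in *. lia. }
      destruct (merge_adj a b c A l k B C B' C' s2 s' Ha Hab Hbc ND Hs C2 Hs' Cs' Ad) as [Hm [HsH HinH]].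
      exists Hm, (fun t => C t \/ C' t). split; auto.
      destruct (HinH s1 (or_introl C1)) as [[X1 _] _].
      destruct (HinH s' (or_intror Cs')) as [[_ X2] _].
      subst s'. destruct s2 as [[x y] z]. unfold add, cx in *. lia.
    + assert (Hl0 : 0 < bx1 B) by lia.
      set (s' := add s1 (-1,0,0)).
      assert (Ad : adjacent s1 s') by (exists (-1,0,0); split; [right; left; auto|auto]).
      destruct (HU s') as [B' [C' [Hs' [Cs' _]]]].
      { destruct (CE s1 C1) as [_ [X [Y Z0]]]. subst s'. destruct s1 as [[x y] z].
        unfold in_block, cube, add, cx, cy, cz in *; simpl in *. lia. }
      destruct (merge_adj a b c A l k B C B' C' s1 s' Ha Hab Hbc ND Hs C1 Hs' Cs' Ad) as [Hm [HsH HinH]].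
      exists Hm, (fun t => C t \/ C' t). split; auto.
      destruct (HinH s2 (or_introl C2)) as [[_ X1] _].
      destruct (HinH s' (or_intror Cs')) as [[X2 _] _].
      subst s'. destruct s1 as [[x y] z]. unfold add, cx in *. lia.
Qed.
Close Scope Z_scope.

Theorem lemma1 (a b c : nat) (Ha : (1 <= a)%nat) (Hab : (a <= b)%nat) (Hbc : (b <= c)%nat) :
  exists kappa lambda : nat, (1 <= kappa)%nat /\
  forall (A : site -> Prop) (l : nat),
    internally_spanned a b c A (cube l) ->
    forall k : nat, (1 <= k)%nat -> (kappa * k + lambda <= l)%nat ->
    exists B : block,
      valid_block B /\ block_sub B (cube l) /\
      (Z.of_nat k <= longest_side B <= Z.of_nat (kappa * k + lambda))%Z /\
      weakly_crossed a b c A B.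
Proof.
  exists 2%nat, (2 * c)%nat. split; [lia|].
  intros A l Hsp k Hk Hl.
  destruct (classic (Done a b c A l k)) as [D|ND]; [exact D|].
  exfalso.
  assert (HU : forall s, in_block (cube l) s -> U a b c A l k s).
  { intros s Hs. apply (U_closed a b c A l k Ha Hab Hbc Hk ND). apply Hsp; auto. }
  destruct (extent a b c A l k Ha Hab Hbc Hk Hl ND HU k (le_n _)) as [B [C [[_ Hlt] Hext]]].
  pose proof (ls_x B). lia.
Qed.
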